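(* For any time warps $f,g$: (a) $f\backslash g=f^{r}g\vee(\top f)^{r}\vee g^{o}$; (b) $g/f=g f^{\ell}\vee (f^{\ell})^{o}$.
   Context: Let $\overline{\omega}=\omega\cup\{\omega\}$ be the natural numbers with a top element $\omega$ adjoined, with its natural total order. A time warp is a monotone map $f\colon\overline{\omega}\to\overline{\omega}$ with $f(0)=0$ and $f(\omega)=\bigvee\{f(n)\mid n\in\omega\}$. The set $W$ of time warps is ordered pointwise, with $\vee$ the pointwise join and $fg:=f\circ g$; $\mathrm{id}$ is the identity and $\top$ maps every $p\ne0$ to $\omega$ and $0$ to $0$. The residuals $\backslash,/$ are the binary operations on $W$ satisfying, for all $f,g,h\in W$: $f\le h/g \iff fg\le h \iff g\le f\backslash h$. For a time warp $f$ define $f^{\ell}:=\mathrm{id}/f$, $f^{r}:=f\backslash\mathrm{id}$, and $f^{o}:=\top\backslash f$. *)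

(* Defs.v *)
From Stdlib Require Import Arith Lia Classical.

Inductive onat : Type := fin : nat -> onat | om : onat.

Definition ole (x y : onat) : Prop :=
  match x, y with
  | _, om => True
  | fin a, fin b => a <= b
  | om, fin _ => False
  end.

Definition omax (x y : onat) : onat :=
  match x, y with
  | fin a, fin b => fin (Nat.max a b)
  | _, _ => om
  end.

Definition is_sup (a : nat -> onat) (s : onat) : Prop :=
  (forall n, ole (a n) s) /\ (forall u, (forall n, ole (a n) u) -> ole s u).

Record timewarp (f : onat -> onat) : Prop := {
  tw_mono : forall x y, ole x y -> ole (f x) (f y);
  tw_zero : f (fin 0) = fin 0;
  tw_sup  : is_sup (fun n => f (fin n)) (f om)
}.

Record W : Type := mkW { wfun :> onat -> onat; wtw : timewarp wfun }.

Definition Wle (f g : W) : Prop := forall x, ole (f x) (g x).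

Lemma ole_refl x : ole x x.
Proof. destruct x; simpl; auto. Qed.

Lemma ole_trans x y z : ole x y -> ole y z -> ole x z.
Proof. destruct x, y, z; simpl; intros; auto; try lia; contradiction. Qed.

Lemma id_tw : timewarp (fun x => x).
Proof.
  split; auto. split; [intros; exact I|].
  intros [m|] H; simpl; auto. specialize (H (S m)); simpl in H; lia.
Qed.

Definition topf (x : onat) : onat :=
  match x with fin 0 => fin 0 | _ => om end.

Lemma top_tw : timewarp topf.
Proof.
  split; auto.
  - intros [[|a]|] [[|b]|]; simpl; auto; lia.
  - split; [intros [|n]; exact I|]. intros u H. specialize (H 1). exact H.
Qed.

Lemma omax_le x y u : ole x u -> ole y u -> ole (omax x y) u.
Proof. destruct x, y, u; simpl; auto; lia. Qed.

Lemma join_tw f g : timewarp f -> timewarp g -> timewarp (fun x => omax (f x) (g x)).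
Proof.
  intros [fm f0 [fs1 fs2]] [gm g0 [gs1 gs2]]. split.
  - intros x y Hxy. specialize (fm _ _ Hxy). specialize (gm _ _ Hxy).
    destruct (f x), (f y), (g x), (g y); simpl in *; auto; lia.
  - rewrite f0, g0. reflexivity.
  - split.
    + intros n. specialize (fs1 n). specialize (gs1 n). simpl in *.
      destruct (f (fin n)), (g (fin n)), (f om), (g om); simpl in *; auto; lia.
    + intros u H. apply omax_le.
      * apply fs2. intros n. specialize (H n).
        destruct (f (fin n)), (g (fin n)), u; simpl in *; auto; lia.
      * apply gs2. intros n. specialize (H n).
        destruct (f (fin n)), (g (fin n)), u; simpl in *; auto; lia.
Qed.

Lemma comp_tw f g : timewarp f -> timewarp g -> timewarp (fun x => f (g x)).
Proof.
  intros Hf Hg. destruct Hf as [fm f0 [fs1 fs2]], Hg as [gm g0 [gs1 gs2]]. split.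
  - intros x y H. apply fm, gm, H.
  - rewrite g0. exact f0.
  - split.
    + intros n. apply fm. apply gs1.
    + intros u H. destruct (g om) as [m|] eqn:Eg.
      * assert (Ex : exists n, g (fin n) = fin m).
        { apply NNPP. intros Hn.
          assert (Hlt : forall n, ole (g (fin n)) (fin (m - 1))).
          { intros n. specialize (gs1 n). try rewrite Eg in gs1.
            destruct (g (fin n)) as [a|] eqn:Ea; simpl in *; [|contradiction].
            destruct (Nat.eq_dec a m) as [->|]; [exfalso; apply Hn; eauto|lia]. }
          specialize (gs2 _ Hlt). try rewrite Eg in gs2. simpl in gs2.
          destruct m as [|m]; [apply Hn; exists 0; exact g0|]. simpl in gs2. lia. }
        destruct Ex as [n En]. specialize (H n). simpl in H. rewrite En in H. exact H.
      * apply fs2. intros k.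
        assert (Ex : exists n, ole (fin k) (g (fin n))).
        { apply NNPP. intros Hn.
          assert (Hle : forall n, ole (g (fin n)) (fin k)).
          { intros n. destruct (g (fin n)) as [a|] eqn:Ea; simpl.
            - destruct (le_lt_dec a k); auto. exfalso. apply Hn. exists n.
              rewrite Ea. simpl. lia.
            - exfalso. apply Hn. exists n. rewrite Ea. exact I. }
          specialize (gs2 _ Hle). try rewrite Eg in gs2. exact gs2. }
        destruct Ex as [n En]. eapply ole_trans; [apply fm, En|]. apply H.
Qed.

Definition Wid : W := mkW _ id_tw.
Definition Wtop : W := mkW _ top_tw.
Definition Wjoin (f g : W) : W := mkW _ (join_tw _ _ (wtw f) (wtw g)).
(* Wcomp f g = f g := f o g *)
Definition Wcomp (f g : W) : W := mkW _ (comp_tw _ _ (wtw f) (wtw g)).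

(* [ldiv] = \ and [rdiv] = / are residuals:
   f <= h / g  <->  f g <= h  <->  g <= f \ h *)
Definition residuals (ldiv rdiv : W -> W -> W) : Prop :=
  forall f g h : W,
    (Wle f (rdiv h g) <-> Wle (Wcomp f g) h) /\
    (Wle (Wcomp f g) h <-> Wle g (ldiv f h)).

(* Main.v *)
Require Import Defs.
From Stdlib Require Import Arith Lia Classical FunctionalExtensionality ProofIrrelevance.

Lemma W_ext (f g : W) : (forall x, f x = g x) -> f = g.
Proof.
  destruct f as [f Hf], g as [g Hg]; simpl; intros H.
  assert (f = g) by (apply functional_extensionality; exact H). subst.
  f_equal. apply proof_irrelevance.
Qed.

Lemma ole_antisym x y : ole x y -> ole y x -> x = y.
Proof. destruct x, y; simpl; intros; auto; try contradiction. f_equal; lia. Qed.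

Lemma Wle_antisym (f g : W) : Wle f g -> Wle g f -> f = g.
Proof. intros H1 H2. apply W_ext. intros x. apply ole_antisym; auto. Qed.

Lemma ole_om x : ole x om.
Proof. destruct x; exact I. Qed.

Lemma ole_0 x : ole (fin 0) x.
Proof. destruct x; simpl; auto; lia. Qed.

Lemma omax_l x y : ole x (omax x y).
Proof. destruct x, y; simpl; auto; lia. Qed.
Lemma omax_r x y : ole y (omax x y).
Proof. destruct x, y; simpl; auto; lia. Qed.

Lemma Wmono (f : W) x y : ole x y -> ole (f x) (f y).
Proof. apply (tw_mono _ (wtw f)). Qed.
Lemma Wzero (f : W) : f (fin 0) = fin 0.
Proof. apply (tw_zero _ (wtw f)). Qed.
Lemma Wsup (f : W) u : (forall n, ole (f (fin n)) u) -> ole (f om) u.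
Proof. apply (tw_sup _ (wtw f)). Qed.

Lemma W_omax (f : W) a b u : ole (f a) u -> ole (f b) u -> ole (f (omax a b)) u.
Proof.
  intros Ha Hb. destruct a as [a|], b as [b|]; simpl; auto.
  destruct (Nat.max_spec a b) as [[_ ->]|[_ ->]]; auto.
Qed.

Lemma Wle_fin (A B : W) : (forall n, ole (A (fin n)) (B (fin n))) -> Wle A B.
Proof.
  intros H [n|]; auto. apply Wsup. intros n. eapply ole_trans; [apply H|].
  apply Wmono, ole_om.
Qed.

Lemma topf_fin z n : ole (topf z) (fin n) -> z = fin 0.
Proof. destruct z as [[|a]|]; simpl; auto; contradiction. Qed.

Lemma f_le_top (f : W) z : ole (f z) (topf z).
Proof.
  destruct z as [[|a]|]; simpl; try apply ole_om. rewrite Wzero. simpl; auto.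
Qed.

Definition stepf (m : nat) (c : onat) (y : onat) : onat :=
  match y with fin a => if a <=? m then fin 0 else c | om => c end.

Lemma step_tw m c : timewarp (stepf m c).
Proof.
  split.
  - intros [a|] [b|]; simpl; intros H; try contradiction.
    + destruct (a <=? m) eqn:E1, (b <=? m) eqn:E2; auto using ole_0, ole_refl.
      all: try apply Nat.leb_le in E1; try apply Nat.leb_le in E2;
           try apply Nat.leb_gt in E1; try apply Nat.leb_gt in E2; lia.
    + destruct (a <=? m); auto using ole_0, ole_refl.
    + apply ole_refl.
  - reflexivity.
  - split.
    + intros n; simpl. destruct (n <=? m); auto using ole_0, ole_refl.
    + intros u H. specialize (H (S m)).
      assert (E : (S m <=? m) = false) by (apply Nat.leb_gt; lia).
      unfold stepf in H. rewrite E in H. exact H.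
Qed.

Definition Wstep m c : W := mkW _ (step_tw m c).

Lemma step_hi m c n : m < n -> Wstep m c (fin n) = c.
Proof. intros H. simpl. destruct (n <=? m) eqn:E; auto. apply Nat.leb_le in E; lia. Qed.

Lemma min_ex (P : nat -> Prop) : (exists n, P n) -> exists n, P n /\ forall m, P m -> n <= m.
Proof.
  intros [n Hn]. revert Hn.
  induction n as [n IH] using (well_founded_induction lt_wf). intros Hn.
  destruct (classic (exists m, m < n /\ P m)) as [[m [Hm Pm]]|Hno].
  - apply (IH m Hm Pm).
  - exists n. split; auto. intros m Pm. destruct (le_lt_dec n m); auto.
    exfalso; apply Hno; eauto.
Qed.

Theorem lemma2p4 :
  forall (ldiv rdiv : W -> W -> W),
    residuals ldiv rdiv ->
    forall f g : W,
      ldiv f g =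
        Wjoin (Wjoin (Wcomp (ldiv f Wid) g) (ldiv (Wcomp Wtop f) Wid))
              (ldiv Wtop g)
      /\
      rdiv g f = Wjoin (Wcomp g (rdiv Wid f)) (ldiv Wtop (rdiv Wid f)).
Proof.
  intros ldiv rdiv Hres.
  assert (L1 : forall f h, Wle (Wcomp f (ldiv f h)) h).
  { intros f h. apply (proj2 (Hres f (ldiv f h) h)). intros x; apply ole_refl. }
  assert (L2 : forall f h k, Wle (Wcomp f k) h -> Wle k (ldiv f h)).
  { intros f h k. apply (proj2 (Hres f k h)). }
  assert (R1 : forall g h, Wle (Wcomp (rdiv h g) g) h).
  { intros g h. apply (proj1 (Hres (rdiv h g) g h)). intros x; apply ole_refl. }
  assert (R2 : forall g h k, Wle (Wcomp k g) h -> Wle k (rdiv h g)).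
  { intros g h k. apply (proj1 (Hres k g h)). }
  intros f g. split.
  - apply Wle_antisym.
    + apply Wle_fin. intros [|n'].
      { rewrite Wzero. apply ole_0. }
      set (x := fin (S n')).
      set (c := ldiv f g x).
      assert (H : ole (f c) (g x)) by apply (L1 f g x).
      simpl.
      destruct (g x) as [[|m']|] eqn:Eg.
      * eapply ole_trans; [|apply omax_l]. eapply ole_trans; [|apply omax_r].
        assert (Hk : Wle (Wstep 0 c) (ldiv (Wcomp Wtop f) Wid)).
        { apply L2. intros [a|]; simpl; [|apply ole_om].
          destruct (a <=? 0). rewrite Wzero; simpl; lia.
          assert (Hc : f c = fin 0) by (destruct (f c) as [[|]|]; simpl in H; auto; try lia; contradiction).
          rewrite Hc. simpl. lia. }
        specialize (Hk x). unfold x in Hk at 1. rewrite step_hi in Hk by lia. exact Hk.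
      * eapply ole_trans; [|apply omax_l]. eapply ole_trans; [|apply omax_l].
        assert (Hk : Wle (Wstep m' c) (ldiv f Wid)).
        { apply L2. intros [a|]; simpl; [|apply ole_om].
          destruct (a <=? m') eqn:E. rewrite Wzero; simpl; lia.
          apply Nat.leb_gt in E. eapply ole_trans; [exact H|]. simpl; lia. }
        specialize (Hk (fin (S m'))). rewrite step_hi in Hk by lia. exact Hk.
      * eapply ole_trans; [apply ole_om|]. eapply ole_trans; [|apply omax_r].
        assert (Hk : Wle (Wstep n' om) (ldiv Wtop g)).
        { apply L2. intros [a|]; simpl.
          - destruct (a <=? n') eqn:E. simpl; apply ole_0.
            apply Nat.leb_gt in E. simpl.
            assert (HH := Wmono g x (fin a) ltac:(simpl; lia)). rewrite Eg in HH. exact HH.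
          - assert (HH := Wmono g x om I). rewrite Eg in HH. exact HH. }
        specialize (Hk x). unfold x in Hk at 1. rewrite step_hi in Hk by lia. exact Hk.
    + apply L2. intros x. simpl. apply W_omax; [apply W_omax|].
      * apply (L1 f Wid (g x)).
      * set (k := ldiv (Wcomp Wtop f) Wid).
        assert (Hf : forall n, f (k (fin n)) = fin 0).
        { intros n. apply (topf_fin _ n). apply (L1 (Wcomp Wtop f) Wid (fin n)). }
        eapply ole_trans; [|apply ole_0].
        destruct x as [n|]. rewrite Hf; simpl; auto.
        apply (Wsup (Wcomp f k)). intros n; simpl. rewrite Hf; simpl; auto.
      * eapply ole_trans; [apply f_le_top|]. apply (L1 Wtop g x).
  - set (l := rdiv Wid f). set (o := ldiv Wtop l).
    apply Wle_antisym.
    + apply Wle_fin. intros [|n'].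
      { rewrite Wzero. apply ole_0. }
      set (y := fin (S n')).
      destruct (classic (exists k, ole y (f (fin k)))) as [Hex|Hno].
      * destruct (min_ex _ Hex) as [k0 [Hk0 Hmin]].
        assert (Hw : Wle (Wstep n' (fin k0)) l).
        { apply R2. intros [b|]; cbn [wfun Wcomp Wstep Wid]; [|apply ole_om].
          destruct (f (fin b)) as [a|] eqn:Ef.
          - unfold stepf. destruct (le_lt_dec a n') as [E|E].
            + replace (a <=? n') with true by (symmetry; apply Nat.leb_le; lia). simpl; lia.
            + replace (a <=? n') with false by (symmetry; apply Nat.leb_gt; lia).
              simpl. apply Hmin. rewrite Ef. simpl. lia.
          - simpl. apply Hmin. rewrite Ef. exact I. }
        specialize (Hw y). unfold y in Hw at 1. rewrite step_hi in Hw by lia.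
        simpl. eapply ole_trans; [|apply omax_l].
        eapply ole_trans; [apply (Wmono (rdiv g f) _ _ Hk0)|].
        eapply ole_trans; [apply (R1 f g (fin k0))|].
        apply Wmono. exact Hw.
      * assert (Hw : Wle (Wstep n' om) l).
        { apply R2. intros [b|]; cbn [wfun Wcomp Wstep Wid]; [|apply ole_om].
          destruct (f (fin b)) as [a|] eqn:Ef.
          - unfold stepf. destruct (le_lt_dec a n') as [E|E].
            + replace (a <=? n') with true by (symmetry; apply Nat.leb_le; lia). simpl; lia.
            + exfalso. apply Hno. exists b. rewrite Ef. simpl. lia.
          - exfalso. apply Hno. exists b. rewrite Ef. exact I. }
        assert (Hly : l y = om).
        { specialize (Hw y). unfold y in Hw at 1. rewrite step_hi in Hw by lia.
          destruct (l y); [contradiction|reflexivity]. }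
        assert (Ho : Wle (Wstep n' om) o).
        { apply L2. intros [a|]; simpl.
          - destruct (a <=? n') eqn:E. simpl; apply ole_0.
            apply Nat.leb_gt in E. simpl.
            assert (HH := Wmono l y (fin a) ltac:(simpl; lia)). rewrite Hly in HH. exact HH.
          - assert (HH := Wmono l y om I). rewrite Hly in HH. exact HH. }
        specialize (Ho y). unfold y in Ho at 1. rewrite step_hi in Ho by lia.
        eapply ole_trans; [apply ole_om|]. eapply ole_trans; [exact Ho|].
        simpl. apply omax_r.
    + apply R2. intros x. simpl. apply omax_le.
      * apply Wmono. apply (R1 f Wid x).
      * assert (Hf : forall n, o (f (fin n)) = fin 0).
        { intros n. apply (topf_fin _ n). eapply ole_trans.
          apply (L1 Wtop l (f (fin n))). apply (R1 f Wid (fin n)). }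
        eapply ole_trans; [|apply ole_0].
        destruct x as [n|]. rewrite Hf; simpl; auto.
        apply (Wsup (Wcomp o f)). intros n; simpl. rewrite Hf; simpl; auto.
Qed.
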